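(* Let $A\in\mathcal F$ with $\mathbb P(A)>0$, and for $k\ge1$ let $m_k(\omega)$ be the $k$-th visiting time of the $\theta$-orbit of $\omega$ to $A$, i.e. $m_1(\omega)=\min\{n\ge1:\theta^n\omega\in A\}$ and $m_{k+1}(\omega)=\min\{n>m_k(\omega):\theta^n\omega\in A\}$. If $m_1\in L^p(\Omega,\mathcal F,\mathbb P)$ for some $p>0$, then for every $0<\delta<p$ there exists $B\in L^{p/2-\delta}(\Omega,\mathcal F,\mathbb P)$ such that for $\mathbb P$-a.e. $\omega$ and all $k\ge1$, $$m_k(\omega)\le B(\omega)k^{1+1/p+\delta}.$$
   Context: $(\Omega,\mathcal F,\mathbb P,\theta)$ is the shift system of a stationary sequence indexed by $\mathbb Z$; $\theta$ is an invertible measurable map preserving $\mathbb P$. *)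

(* Defs.v *)
From HB Require Import structures.
From mathcomp Require Import all_boot all_order all_algebra.
From mathcomp Require Import all_classical all_reals all_analysis measurable_realfun.
Set Implicit Arguments. Unset Strict Implicit. Unset Printing Implicit Defensive.
Import Order.TTheory GRing.Theory Num.Theory.
Local Open Scope classical_set_scope.
Local Open Scope ring_scope.

Definition invertible_mp {d} {T : measurableType d} {R : realType}
  (P : probability T R) (theta : T -> T) : Prop :=
  measurable_fun setT theta /\
  exists thinv : T -> T,
    [/\ measurable_fun setT thinv, cancel theta thinv, cancel thinv theta &
        forall S, measurable S -> P (theta @^-1` S) = P S].

(* visit_time A theta k w : the k-th visiting time (k >= 1) of the
   theta-orbit of w to A, +oo if there is no k-th visit.
   visit_time _ _ 0 w = 0 (auxiliary), and
   visit_time (k+1) w = min { n : n > visit_time k w, theta^n w \in A }. *)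
Fixpoint visit_time {T : Type} {R : realType} (A : set T) (theta : T -> T)
  (k : nat) (w : T) : \bar R :=
  match k with
  | 0 => 0%E
  | k'.+1 => ereal_inf [set (n%:R)%:E | n in
                [set n : nat | (@visit_time T R A theta k' w < (n%:R)%:E)%E /\
                               A (iter n theta w)]]
  end.

Definition in_Lp_ext {d} {T : measurableType d} {R : realType}
  (P : probability T R) (p : R) (f : T -> \bar R) : Prop :=
  measurable_fun [set: T] f /\ (\int[P]_x (poweR `|f x| p) < +oo)%E.

(* Main.v *)
Require Import Defs.
From HB Require Import structures.
From mathcomp Require Import all_boot all_order all_algebra.
From mathcomp Require Import all_classical all_reals all_analysis measurable_realfun.
From mathcomp Require Import ring lra.
Import Order.TTheory GRing.Theory Num.Theory.
Local Open Scope classical_set_scope.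
Local Open Scope ring_scope.

Set Implicit Arguments. Unset Strict Implicit. Unset Printing Implicit Defensive.
Section Det.
Variable V : nat -> Prop.
Hypothesis hV : forall n, exists m, (n < m)%N /\ V m.

Lemma exP n : exists m, (fun m => (n < m)%N && `[< V m >]) m.
Proof. by case: (hV n) => m [h1 h2]; exists m; rewrite h1 /=; apply/asboolP. Qed.

Definition nxt n := ex_minn (exP n).

Lemma nxt_spec n : [/\ (n < nxt n)%N, V (nxt n) &
   forall m, (n < m)%N -> V m -> (nxt n <= m)%N].
Proof.
rewrite /nxt; case: ex_minnP => m /andP[h1 /asboolP h2] hmin; split => //.
by move=> k hk vk; apply: hmin; rewrite hk /=; apply/asboolP.
Qed.

Lemma nxt_const n m : (n <= m)%N -> (m < nxt n)%N -> nxt m = nxt n.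
Proof.
move=> nm mn; have [a1 a2 a3] := nxt_spec n; have [b1 b2 b3] := nxt_spec m.
apply/eqP; rewrite eqn_leq; apply/andP; split; first exact: b3.
by apply: a3 => //; exact: leq_ltn_trans b1.
Qed.

Definition Mv k := iter k nxt 0.
Definition fv n := (nxt n - n)%N.

Lemma Mv_ge k : (k <= Mv k)%N.
Proof.
elim: k => //= k IH; have [h _ _] := nxt_spec (Mv k).
exact: leq_ltn_trans IH h.
Qed.

Variable R : realType.

Lemma count_gap (t : R) g : 0 <= t ->
  g%:R - t <= \sum_(j < g) ((t <= (g - j)%:R)%R : nat)%:R.
Proof.
move=> t0; elim: g => [|g IH]; first by rewrite big_ord0 sub0r oppr_le0.
rewrite big_ord_recl /= subn0.
under eq_bigr => j _ do rewrite /bump /= add1n subSS.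
case: (lerP t g.+1%:R) => ht /=.
  rewrite -natr1; move: IH; lra.
apply: le_trans (_ : 0 <= _); last by rewrite add0r sumr_ge0.
by rewrite subr_le0 ltW.
Qed.

Lemma count_M (t : R) k : 0 <= t ->
  (Mv k)%:R - k%:R * t <= \sum_(i < Mv k) ((t <= (fv i)%:R)%R : nat)%:R.
Proof.
move=> t0; elim: k => [|k IH]; first by rewrite /= big_ord0 mul0r subr0.
have [h1 _ _] := nxt_spec (Mv k).
set g := fv (Mv k).
have eM : Mv k.+1 = (Mv k + g)%N by rewrite /= /g /fv subnKC // ltnW.
rewrite eM big_split_ord /=.
have eg : forall j : 'I_g, fv (Mv k + j) = (g - j)%N.
  move=> j; rewrite /fv (@nxt_const (Mv k)) ?leq_addr //; last first.
    by rewrite -(subnKC (ltnW h1)) ltn_add2l.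
  by rewrite /g /fv -{1}(subnKC (ltnW h1)) subnDl.
under [X in _ <= _ + X]eq_bigr => j _ do rewrite eg.
apply: le_trans (lerD IH (count_gap g t0)).
by rewrite natrD -natr1 mulrDl mul1r; lra.
Qed.


Lemma det_bound (p b h : R) k : 0 < p -> 0 <= b -> (0 < k)%N ->
  \sum_(i < Mv k) ((fv i)%:R `^ p * riemannR b i) <= h ->
  (Mv k)%:R `^ (p + 1 - b) <= 2 `^ (p + 1) * k%:R `^ p * h.
Proof.
move=> p0 b0 k0 Hh.
set N := Mv k.
have kN : (k <= N)%N by exact: Mv_ge.
have N1 : 1 <= N%:R :> R by rewrite ler1n (leq_trans k0 kN).
have k1 : 1 <= k%:R :> R by rewrite ler1n.
set t : R := N%:R / (2 * k%:R).
have t0 : 0 <= t by rewrite /t divr_ge0 // mulr_ge0.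
have Nb0 : 0 < N%:R `^ b by rewrite powR_gt0 // (lt_le_trans _ N1).
have S1 : \sum_(i < N) (t `^ p * ((t <= (fv i)%:R)%R : nat)%:R) * (N%:R `^ b)^-1 <= h.
  apply: le_trans Hh; apply: ler_sum => i _.
  apply: ler_pM; first by rewrite mulr_ge0 // powR_ge0.
  - by rewrite invr_ge0 ltW.
  - case: (lerP t (fv i)%:R) => ht /=; last by rewrite mulr0 powR_ge0.
    by rewrite mulr1 ge0_ler_powR // ?nnegrE // ltW.
  - rewrite /riemannR lef_pV2 ?posrE ?powR_gt0 //.
    by rewrite ge0_ler_powR // ?nnegrE // ler_nat.
  by rewrite (lt_le_trans _ N1).
rewrite -mulr_suml -mulr_sumr in S1.
have C := count_M k t0; rewrite -/N in C.
have kt : N%:R - k%:R * t = N%:R / 2.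
  rewrite /t; field.
  by rewrite pnatr_eq0 -lt0n.
rewrite kt in C.
have H2 : t `^ p * (N%:R / 2) * (N%:R `^ b)^-1 <= h.
  apply: le_trans S1; apply: ler_wpM2r; first by rewrite invr_ge0 ltW.
  by apply: ler_wpM2l => //; exact: powR_ge0.
have eN : N%:R = t * (2 * k%:R) :> R.
  rewrite /t mulfVK // mulf_neq0 // pnatr_eq0 -lt0n //.
have E1 : N%:R `^ (p + 1 - b) = t `^ p * (2 `^ p * k%:R `^ p) * N%:R * (N%:R `^ b)^-1.
  rewrite powRD; last by rewrite pnatr_eq0 -lt0n (leq_trans k0 kN) implybT.
  rewrite powRN powRD; last by rewrite pnatr_eq0 -lt0n (leq_trans k0 kN) implybT.
  rewrite powRr1 // {1}eN powRM // ?mulr_ge0 // powRM //.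
have e2 : 2 `^ (p+1) = 2 `^ p * 2 :> R by rewrite powRD ?pnatr_eq0 ?implybT // powRr1.
rewrite E1 e2.
have P20 : 0 <= 2 `^ p * k%:R `^ p :> R by rewrite mulr_ge0 // powR_ge0.
move: H2 P20; set X := t `^ p; set Y := (N%:R `^ b)^-1; set Z := 2 `^ p * k%:R `^ p.
move=> H2 P20.
have -> : 2 `^ p * 2 * k%:R `^ p * h = Z * (2 * h) by rewrite /Z; ring.
have -> : X * Z * N%:R * Y = Z * (2 * (X * (N%:R / 2) * Y)) by field.
by apply: ler_wpM2l => //; apply: ler_wpM2l.
Qed.


Lemma det_bound2 (p b h a : R) k : 0 < p -> 0 <= b -> 0 < p + 1 - b ->
  (0 < k)%N -> p / (p + 1 - b) <= a ->
  \sum_(i < Mv k) ((fv i)%:R `^ p * riemannR b i) <= h ->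
  (Mv k)%:R <= (2 `^ (p + 1) * h) `^ (p + 1 - b)^-1 * k%:R `^ a.
Proof.
move=> p0 b0 s0 k0 pa Hh.
have h0 : 0 <= h.
  apply: le_trans Hh; apply: sumr_ge0 => i _.
  by rewrite mulr_ge0 ?powR_ge0 // ltW // riemannR_gt0.
have H := det_bound p0 b0 k0 Hh.
have k1 : 1 <= k%:R :> R by rewrite ler1n.
set s := p + 1 - b in s0 pa H *.
have eN : (Mv k)%:R = ((Mv k)%:R `^ s) `^ s^-1 :> R.
  by rewrite -powRrM divff ?gt_eqF // powRr1.
rewrite eN; apply: le_trans.
  apply: ge0_ler_powR H; rewrite ?invr_ge0 ?ltW // nnegrE ?powR_ge0 //.
  by rewrite !mulr_ge0 ?powR_ge0.
rewrite mulrAC [X in X <= _]powRM ?mulr_ge0 ?powR_ge0 // -powRrM.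
by apply: ler_wpM2l; [exact: powR_ge0 | exact: ler_powR].
Qed.

End Det.


Lemma inf_nat (R : realType) (S : set nat) m : S m ->
  (forall n, S n -> (m <= n)%N) ->
  ereal_inf [set ((n%:R)%:E : \bar R) | n in S] = (m%:R)%:E.
Proof.
move=> Sm Smin; apply/eqP; rewrite eq_le; apply/andP; split.
  by apply: ereal_inf_lbound; exists m.
by apply: le_ereal_inf_tmp => _ [n Sn <-]; rewrite lee_fin ler_nat Smin.
Qed.

Section VT.
Variables (T : Type) (R : realType) (A : set T) (th : T -> T) (w : T).
Hypothesis hV : forall n, exists m, (n < m)%N /\ A (iter m th w).

Lemma vt_M k : @visit_time T R A th k w = ((Mv hV k)%:R)%:E.
Proof.
elim: k => [|k IH] /=; first by [].
rewrite IH; have [h1 h2 h3] := nxt_spec hV (Mv hV k).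
apply: inf_nat; first by split => //; rewrite lte_fin ltr_nat.
move=> n [hn vn]; move: hn; rewrite lte_fin ltr_nat => hn; exact: h3.
Qed.

Lemma vt1_iter n : @visit_time T R A th 1 (iter n th w) = ((fv hV n)%:R)%:E.
Proof.
have [h1 h2 h3] := nxt_spec hV n.
rewrite /=; apply: inf_nat.
  split; first by rewrite lte_fin ltr0n subn_gt0.
  by rewrite -iterD /fv subnK // ltnW.
move=> m [m0]; move: m0; rewrite lte_fin ltr0n => m0; rewrite -iterD => Am.
rewrite /fv leq_subLR addnC; apply: h3 => //; rewrite -{1}(add0n n) ltn_add2r //.
Qed.

End VT.

Lemma visits_of_fin (T : Type) (R : realType) (A : set T) (th : T -> T) (w : T) :
  (forall n, (@visit_time T R A th 1 (iter n th w) < +oo)%E) ->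
  forall n, exists m, (n < m)%N /\ A (iter m th w).
Proof.
move=> H n; have := H n => /= /ereal_inf_lt [_ [i [i0 Ai] <-] _].
exists (i + n)%N; split; last by rewrite iterD.
by move: i0; rewrite lte_fin ltr0n => i0; rewrite -{1}(add0n n) ltn_add2r.
Qed.

Unset Implicit Arguments. Set Strict Implicit.

Lemma key_ineq (R : realType) (c x : R) : 0 < c -> 0 < x ->
  c * ((x + 1) `^ (1 + c))^-1 <= (x `^ c)^-1 - ((x + 1) `^ c)^-1.
Proof.
move=> c0 x0; set y := x + 1.
have y1 : 1 < y by rewrite /y; lra.
have y0 : 0 < y by lra.
have hL : y^-1 <= ln y - ln x.
  have yi : y^-1 < 1 by rewrite invf_lt1 //.
  have yi0 : 0 < y^-1 by rewrite invr_gt0.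
  have ex : ln x = ln y + ln (1 + (- y^-1)).
    rewrite -lnM ?posrE; last by lra.
      by congr ln; rewrite /y; field; lra.
    by [].
  have := @le_ln1Dx R (- y^-1); rewrite ex; lra.
rewrite /powR !gt_eqF //.
have e1 : expR ((1 + c) * ln y) = y * expR (c * ln y).
  by rewrite mulrDl mul1r expRD lnK.
have e2 : (expR (c * ln x))^-1 = expR (c * (ln y - ln x)) * (expR (c * ln y))^-1.
  by rewrite -!expRN -expRD; congr expR; ring.
rewrite e1 e2 invfM.
set E := (expR (c * ln y))^-1.
have E0 : 0 <= E by rewrite /E invr_ge0 expR_ge0.
rewrite mulrA -[X in _ <= _ - X]mul1r -mulrBl.
apply: ler_wpM2r => //.
have := expR_ge1Dx (c * (ln y - ln x)).
have : c * y^-1 <= c * (ln y - ln x) by apply: ler_wpM2l => //; exact: ltW.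
lra.
Qed.

Lemma riemann_bound (R : realType) (c : R) N : 0 < c ->
  \sum_(i < N) riemannR (1 + c) i <= 1 + c^-1.
Proof.
move=> c0; case: N => [|N].
  rewrite big_ord0; have : 0 < c^-1 by rewrite invr_gt0.
  lra.
have r0 : riemannR (1 + c) 0 = 1 :> R by rewrite /riemannR /= powR1 invr1.
rewrite big_ord_recl r0 lerD2l.
have -> : \sum_(i < N) riemannR (1 + c) (bump 0 i) =
    \sum_(i < N) riemannR (1 + c) i.+1 by [].
have step : forall i : nat, riemannR (1 + c) i.+1 <=
    c^-1 * (((i.+1%:R : R) `^ c)^-1 - ((i.+2%:R : R) `^ c)^-1).
  move=> i; rewrite /riemannR -[X in X <= _]mul1r.
  rewrite -[X in X * _ <= _](mulVf (lt0r_neq0 c0)) -mulrA.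
  apply: ler_wpM2l; first by rewrite invr_ge0 ltW.
  by rewrite -(@natr1 R i.+1) key_ineq // ltr0n.

have S1 : \sum_(i < N) riemannR (1 + c) i.+1 <=
    \sum_(i < N) (c^-1 * (((i.+1%:R : R) `^ c)^-1 - ((i.+2%:R : R) `^ c)^-1)).
  by apply: ler_sum => i _; exact: step.
apply: le_trans S1 _; rewrite -mulr_sumr -(big_mkord xpredT (fun i => ((i.+1%:R : R) `^ c)^-1 - ((i.+2%:R : R) `^ c)^-1)).
rewrite (telescope_sumr_eq (fun i => - ((i.+1%:R : R) `^ c)^-1)) //.
  rewrite /= powR1 invr1.
  rewrite -[X in _ <= X]mulr1; apply: ler_wpM2l; first by rewrite invr_ge0 ltW.
  have : 0 <= ((N.+1%:R : R) `^ c)^-1 by rewrite invr_ge0 powR_ge0.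
  lra.
by move=> k _; rewrite opprK addrC.
Qed.

Lemma pow_le1D (R : realType) (y r : R) : 0 <= y -> 0 <= r <= 1 -> y `^ r <= 1 + y.
Proof.
move=> y0 /andP[r0 r1]; case: (lerP y 1) => hy.
  apply: le_trans (_ : 1 <= 1 + y); last by lra.
  move: y0; rewrite le_eqVlt => /predU1P[<-|yp].
    by rewrite /powR eqxx; case: (r == 0).
  by rewrite -[X in _ <= X](powRr0 y) ger_powR // yp hy.
by apply: le_trans (ler1_powR (ltW hy) r1) _; lra.
Qed.

Lemma iter_mfun d (T : measurableType d) (th : T -> T) n :
  measurable_fun setT th -> measurable_fun setT (iter n th).
Proof.
move=> mth; elim: n => [|n IH]; first exact: measurable_id.
exact: (measurableT_comp mth IH).
Qed.

Lemma iter_pres d (T : measurableType d) (R : realType) (P : probability T R)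
  (th : T -> T) n :
  measurable_fun setT th ->
  (forall S, measurable S -> P (th @^-1` S) = P S) ->
  forall S, measurable S -> P (iter n th @^-1` S) = P S.
Proof.
move=> mth pres; elim: n => [|n IH] S mS; first by [].
have mS' : measurable (th @^-1` S) by rewrite -[_ @^-1` _]setTI; exact: mth.
by rewrite -(pres S mS) -(IH _ mS').
Qed.

Lemma iter_integral d (T : measurableType d) (R : realType) (P : probability T R)
  (th : T -> T) n (F : T -> \bar R) :
  measurable_fun setT th ->
  (forall S, measurable S -> P (th @^-1` S) = P S) ->
  measurable_fun setT F -> (forall x, (0 <= F x)%E) ->
  (\int[P]_x F (iter n th x) = \int[P]_x F x)%E.
Proof.
move=> mth pres mF F0.
have mi := @iter_mfun _ _ th n mth.
rewrite [RHS](eq_measure_integral (pushforward P (iter n th))); last first.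
  by move=> S mS _; exact: (esym (@iter_pres _ _ _ P th n mth pres _ mS)).
by rewrite ge0_integral_pushforward //.
Qed.

Lemma eseries_riemann (R : realType) (c : R) : 0 < c ->
  (\sum_(n <oo) (riemannR (1 + c) n)%:E <= (1 + c^-1)%:E)%E.
Proof.
move=> c0.
have nd' : nondecreasing_seq (fun n => \sum_(0 <= i < n) (riemannR (1 + c) i)%:E)%E.
  apply: ereal_nondecreasing_series => n _ _; rewrite lee_fin ltW // riemannR_gt0 //; lra.
move/ereal_nondecreasing_cvgn/cvg_lim : nd' => -> //.
apply: ge_ereal_sup => _ [N _ <-].
by rewrite sumEFin lee_fin big_mkord riemann_bound.
Qed.

Theorem lemma9p4 (d : measure_display) (T : measurableType d) (R : realType)
  (P : probability T R) (theta : T -> T) (A : set T) (p : R) :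
  invertible_mp P theta ->
  measurable A -> (0 < P A)%E ->
  0 < p ->
  in_Lp_ext P p (@visit_time T R A theta 1) ->
  forall delta : R, 0 < delta -> delta < p ->
  exists B : T -> R,
    [/\ measurable_fun setT B,
        (0 < p / 2 - delta ->
           (\int[P]_x ((`|B x| `^ (p / 2 - delta))%:E) < +oo)%E) &
        {ae P, forall w, forall k : nat, (1 <= k)%N ->
           (@visit_time T R A theta k w <=
              (B w * (k%:R `^ (1 + p^-1 + delta)))%:E)%E}].
Proof.
move=> [mth [thinv [_ _ _ pres]]] mA PA0 p0 [mm1 Ifin] delta d0 dp.
pose c := p * delta / (1 + 2 * delta).
pose b := 1 + c.
have d2 : 1 + 2 * delta != 0 by rewrite gt_eqF //; lra.
have c0 : 0 < c by rewrite /c divr_gt0 ?mulr_gt0 //; lra.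
have es : p + 1 - b = p * (1 + delta) / (1 + 2 * delta).
  by rewrite /b /c; field.
have s0 : 0 < p + 1 - b by rewrite es divr_gt0 ?mulr_gt0 //; lra.
have b0 : 0 <= b by rewrite /b; lra.
have pa : p / (p + 1 - b) <= 1 + p^-1 + delta.
  rewrite es.
  have -> : p / (p * (1 + delta) / (1 + 2 * delta)) = (1 + 2 * delta) / (1 + delta).
    field; rewrite d2 /= !gt_eqF //; lra.
  rewrite ler_pdivrMr; last by lra.
  have : 0 < p^-1 by rewrite invr_gt0.
  nra.
have qs : p / 2 - delta <= p + 1 - b.
  have -> : p + 1 - b = p / 2 + p / (2 * (1 + 2 * delta)) by rewrite es; field.
  have : 0 < p / (2 * (1 + 2 * delta)) by rewrite divr_gt0 // mulr_gt0 //; lra.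
  lra.
set m1 := @visit_time T R A theta 1 in mm1 Ifin.
pose G n x := ((riemannR b n)%:E * poweR `|m1 (iter n theta x)| p)%E.
pose H x := (\sum_(n <oo) G n x)%E.
have mi n := @iter_mfun _ _ theta n mth.
have {}mm1 : measurable_fun setT m1 := mm1.
have mG n : measurable_fun setT (G n).
  apply: measurable_funeM; apply: measurableT_comp (measurable_poweR p) _.
  exact: (measurableT_comp (@abse_measurable R setT) (measurableT_comp mm1 (mi n))).
have rb0 n : 0 < riemannR b n by apply: riemannR_gt0.
have G0 n x : (0 <= G n x)%E by rewrite mule_ge0 ?lee_fin ?poweR_ge0 // ltW.
have mH : measurable_fun setT H.
  have := @ge0_emeasurable_sum _ T R setT G xpredT (fun k x _ _ => G0 k x) (fun k _ => mG k).
  by [].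
have H0 x : (0 <= H x)%E by apply: nneseries_ge0 => n _ _; exact: G0.
set I := (\int[P]_x poweR `|m1 x| p)%E in Ifin.
have I0 : (0 <= I)%E by apply: integral_ge0 => x _; exact: poweR_ge0.
have mF : measurable_fun setT (fun y => poweR `|m1 y| p).
  apply: measurableT_comp (measurable_poweR p) _.
  exact: (measurableT_comp (@abse_measurable R setT) mm1).
have intG n : (\int[P]_x G n x = (riemannR b n)%:E * I)%E.
  rewrite ge0_integralZl_EFin; [|exact: measurableT|by move=> x _; exact: poweR_ge0|exact: (measurableT_comp mF (mi n))|exact: ltW].
  congr (_ * _)%E.
  exact: (@iter_integral _ _ _ P theta n (fun y => poweR `|m1 y| p) mth pres mF (fun y => poweR_ge0 _ _)).
have Ifn : I \is a fin_num by rewrite ge0_fin_numE.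
have Hfinint : (\int[P]_x H x < +oo)%E.
  rewrite (@integral_nneseries _ _ _ P setT measurableT G mG (fun n x _ => G0 n x)).
  under eq_eseriesr do rewrite intG.
  rewrite -(fineK Ifn).
  under eq_eseriesr do rewrite muleC.
  rewrite nneseriesZl; last by move=> i _; rewrite lee_fin ltW.
  apply: le_lt_trans (_ : _ <= (fine I)%:E * (1 + c^-1)%:E)%E _.
    apply: lee_wpmul2l; first by rewrite lee_fin fine_ge0.
    exact: eseries_riemann.
  by rewrite -EFinM ltey.
have Hint : P.-integrable setT H.
  apply/integrableP; split; first exact: mH.
  under eq_integral => x _ do rewrite gee0_abs //.
  exact: Hfinint.
have aeH := integrable_ae measurableT Hint.
exists (fun x => (2 `^ (p + 1) * fine (H x)) `^ (p + 1 - b)^-1).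
split.
- apply: (measurableT_comp (@measurable_powR R _)).
  apply: measurable_funM; first exact: measurable_cst.
  exact: (measurableT_comp (fine_measurable measurableT) mH).
- move=> q0; set q := p / 2 - delta in q0 *.
  set s := p + 1 - b in s0 pa qs *.
  have mY : measurable_fun setT (fun x => 2 `^ (p + 1) * fine (H x)).
    apply: measurable_funM; first exact: measurable_cst.
    exact: (measurableT_comp (fine_measurable measurableT) mH).
  have Y0 x : 0 <= 2 `^ (p + 1) * fine (H x) by rewrite mulr_ge0 ?powR_ge0 ?fine_ge0.
  under eq_integral => x _ do rewrite ger0_norm ?powR_ge0 // -powRrM.
  have r01 : 0 <= s^-1 * q <= 1.
    apply/andP; split; first by rewrite mulr_ge0 // ?invr_ge0 ltW.
    by rewrite mulrC ler_pdivrMr // mul1r.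
  apply: le_lt_trans (_ : _ <= \int[P]_x (1%:E + (2 `^ (p + 1))%:E * H x))%E _.
    apply: ge0_le_integral.
    + exact: measurableT.
    + by move=> x _; rewrite lee_fin powR_ge0.
    + apply/measurable_EFinP.
      exact: (measurableT_comp (@measurable_powR R _) mY).
    + apply: emeasurable_funD; first exact: measurable_cst.
      exact: measurable_funeM.
    + move=> x _.
      apply: le_trans (_ : (1 + 2 `^ (p + 1) * fine (H x))%:E <= _)%E.
        by rewrite lee_fin pow_le1D.
      rewrite EFinD EFinM leeD2l //; apply: lee_wpmul2l; first by rewrite lee_fin powR_ge0.
      by have := H0 x; case: (H x) => [r| |] //=.
  rewrite (@ge0_integralD _ _ _ P setT measurableT (fun _ => 1%E)
    (fun x => (2 `^ (p + 1))%:E * H x)%E); [| by move=> x _ | exact: measurable_cst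
    | by move=> x _; rewrite mule_ge0 ?lee_fin ?powR_ge0 | exact: measurable_funeM].
  rewrite integral_cst // ge0_integralZl_EFin; [| exact: measurableT | by move=> x _ | exact: mH | exact: powR_ge0].
  apply: lte_add_pinfty; first by rewrite mul1e; apply: le_lt_trans (probability_le1 P measurableT) _; exact: ltry.
  by apply: lte_mul_pinfty; rewrite ?lee_fin ?powR_ge0.
- apply: filterS aeH => x /(_ Logic.I) Hfin k k1.
  have hfin : forall n, (m1 (iter n theta x) < +oo)%E.
    move=> n; rewrite ltey; apply/negP => /eqP e.
    have : H x = +oo%E.
      apply: (@nneseries_pinfty R (G ^~ x) xpredT n (fun i _ => G0 i x)) => //.
      by rewrite /G e /= gt_eqF // gt0_muley // lte_fin.
    by move=> eH; move: Hfin; rewrite eH.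
  have hV := visits_of_fin hfin.
  rewrite (vt_M R hV k) lee_fin.
  apply: det_bound2 => //.
  have eG : forall i, G i x = ((fv hV i)%:R `^ p * riemannR b i)%:E.
    by move=> i; rewrite /G /m1 (vt1_iter R hV i) /= ger0_norm // -EFinM mulrC.
  have := @nneseries_lim_ge R (G ^~ x) xpredT 0%N (Mv hV k) (fun i _ _ => G0 i x).
  rewrite big_mkord.
  under eq_bigr => i _ do rewrite eG.
  by rewrite sumEFin => h; rewrite -lee_fin (fineK Hfin).
Qed.
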